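(* Let $\Gamma$ be a 3-colex, let $c\in\{r,b,g,y\}$, and let $E=\prod_{\nu\in\Omega}X_\nu$ be an $X$-type error on the 3D color code defined on $\Gamma$, with syndrome $s$ (a function on the edges of $\Gamma^*$). Let $\pi_c(s)$ denote the restriction of $s$ to the edges of the minor complex $\Gamma^{*\setminus c}$. Then the error $\pi_c(E)=\prod_{\nu\in\Omega}X_{\pi_c(\nu)}$, regarded as an $X$-error on the 3D toric code associated to $\Gamma^{*\setminus c}$, produces exactly the syndrome $\pi_c(s)$; that is, for every edge $e$ of $\Gamma^{*\setminus c}$, the parity of the number of faces of $\Gamma^{*\setminus c}$ in $\mathrm{supp}(\pi_c(E))$ containing $e$ equals $s_e$.
   Context: Colors are $\{r,b,g,y\}$. A 3-colex $\Gamma$ is a 3-dimensional cell complex without boundary in which every vertex is 4-valent and lies in exactly four 3-cells, and whose 3-cells are properly 4-colored: every face lies in exactly two 3-cells, which have different colors. The dual complex $\Gamma^*$ has an $i$-cell for every $(3-i)$-cell of $\Gamma$, with incidences reversed; every 3-cell of $\Gamma^*$ is a tetrahedron (corresponding to a vertex of $\Gamma$). A vertex of $\Gamma^*$ is given the color of the corresponding 3-cell of $\Gamma$, so the four vertices of each tetrahedron have four distinct colors. A face (triangle) of $\Gamma^*$ is a $c$-face if none of its vertices has color $c$. Each tetrahedron $\nu$ has a unique $c$-face, denoted $\pi_c(\nu)$. The 3D color code on $\Gamma$ has one qubit per tetrahedron $\nu$ of $\Gamma^*$, $X$-stabilizer generators $B^X_v=\prod_{\nu\ni v}X_\nu$ for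 vertices $v$ of $\Gamma^*$ and $Z$-stabilizer generators $B^Z_e=\prod_{\nu\supset e}Z_\nu$ for edges $e$ of $\Gamma^*$. The syndrome of an $X$-error $\prod_{\nu\in\Omega}X_\nu$ is the function on edges $s_e=|\{\nu\in\Omega: e\subset\nu\}|\bmod 2$. The minor complex $\Gamma^{*\setminus c}$ is obtained from $\Gamma^*$ by deleting all vertices of color $c$ together with all edges and faces incident to them (so its edges are the edges of $\Gamma^*$ with no endpoint of color $c$, its faces are the $c$-faces of $\Gamma^*$, and its 3-cells are obtained by merging, for each $c$-vertex $v$, the tetrahedra containing $v$). The 3D toric code on $\Gamma^{*\setminus c}$ has qubits on the faces, $X$-stabilizer generators $\prod_{f\in\partial\mu}X_f$ for 3-cells $\mu$, and $Z$-checks $\prod_{f\supset e}Z_f$ for edges $e$; the syndrome of an $X$-error on faces is, at each edge $e$, the parity of the number of faces in its support containing $e$. Operators are mapped by $\pi_c(\prod_{\nu\in\Omega}X_\nu)=\prod_{\nu\in\Omega}X_{\pi_c(\nu)}$ (with $X_f^2=I$, so two tetrahedra sharing a $c$-face cancel). *)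

(* Defs.v *)
From mathcomp Require Import all_boot.
Set Implicit Arguments. Unset Strict Implicit. Unset Printing Implicit Defensive.

Definition color := 'I_4.

(* The dual complex Gamma^* of a 3-colex, given abstractly as a cell complex:
   finite types of vertices, edges, faces (triangles) and 3-cells (tetrahedra),
   with incidence ("is contained in") relations, and a coloring of vertices
   (vertex v gets the color of the corresponding 3-cell of Gamma). *)
Record dual_complex := DualComplex {
  Vx : finType; Ed : finType; Fc : finType; Tet : finType;
  col : Vx -> color;
  ev : Ed -> Vx -> bool;
  fv : Fc -> Vx -> bool;
  tv : Tet -> Vx -> bool;
  ef : Ed -> Fc -> bool;
  et : Ed -> Tet -> bool;
  ft : Fc -> Tet -> bool
}.

(* Structural axioms: Gamma^* is the dual of a 3-colex, i.e. every edge has two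
   endpoints, every face is a triangle, every 3-cell is a tetrahedron whose
   four vertices carry four distinct colors, incidences are compatible, and
   inside a tetrahedron edges/faces are determined by their vertices. *)
Definition is_colex_dual (K : dual_complex) : Prop :=
  [/\ (forall e : Ed K, #|[set v : Vx K | ev e v]| = 2),
      (forall f : Fc K, #|[set v : Vx K | fv f v]| = 3 /\
                        #|[set e : Ed K | ef e f]| = 3),
      (forall t : Tet K, [/\ #|[set v : Vx K | tv t v]| = 4,
                             #|[set e : Ed K | et e t]| = 6 &
                             #|[set f : Fc K | ft f t]| = 4]),
      (forall (e : Ed K) (f : Fc K) (t : Tet K) (v : Vx K),
         [/\ ef e f -> ev e v -> fv f v,
             et e t -> ev e v -> tv t v,
             ft f t -> fv f v -> tv t v &
             ef e f -> ft f t -> et e t]) &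
   [/\ (forall (t : Tet K) (u v : Vx K), tv t u -> tv t v -> col u = col v -> u = v),
      (forall (t : Tet K) (e e' : Ed K), et e t -> et e' t ->
          (forall v, ev e v = ev e' v) -> e = e') &
      (forall (t : Tet K) (f f' : Fc K), ft f t -> ft f' t ->
          (forall v, fv f v = fv f' v) -> f = f')]].

Definition is_cface (K : dual_complex) (c : color) (f : Fc K) : bool :=
  [forall v : Vx K, fv f v ==> (col v != c)].

(* pi_c(nu): the (unique) c-face of the tetrahedron nu. *)
Definition pi_c (K : dual_complex) (c : color) (nu : Tet K) : option (Fc K) :=
  [pick f : Fc K | ft f nu && is_cface c f].

Definition cc_syndrome (K : dual_complex) (Omega : {set Tet K}) (e : Ed K) : bool :=
  odd #|[set nu in Omega | et e nu]|.

(* Edges of the minor complex Gamma^{*\c}: no endpoint of color c. *)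
Definition minor_edge (K : dual_complex) (c : color) (e : Ed K) : bool :=
  [forall v : Vx K, ev e v ==> (col v != c)].

(* Support of pi_c(E) = prod_{nu in Omega} X_{pi_c(nu)} with X_f^2 = I. *)
Definition pi_support (K : dual_complex) (c : color) (Omega : {set Tet K}) : {set Fc K} :=
  [set f : Fc K | odd #|[set nu in Omega | pi_c c nu == Some f]|].

Definition tc_syndrome (K : dual_complex) (S : {set Fc K}) (e : Ed K) : bool :=
  odd #|[set f in S | ef e f]|.

(* Main.v *)
Require Import Defs.
From mathcomp Require Import all_boot.

Lemma key (T I : finType) (U : {set T}) (A : {set I}) (g : I -> {set T}) :
  {in A &, forall i j, g i = g j -> i = j} ->
  (forall i, i \in A -> g i \subset U /\ #|g i| = #|U|.-1) ->
  #|A| = #|U| -> 0 < #|U| ->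
  forall S : {set T}, S \subset U -> #|S| = #|U|.-1 -> exists2 i, i \in A & g i = S.
Proof.
move=> ginj gsub cA U0.
have cD : forall S : {set T}, S \subset U -> #|S| = #|U|.-1 -> #|U :\: S| = 1.
  move=> S sSU cS; rewrite cardsD (setIidPr sSU) cS.
  by case: #|U| U0 => // n _; rewrite subSn // subnn.
have DD : forall S : {set T}, S \subset U -> U :\: (U :\: S) = S.
  by move=> S sSU; rewrite setDDr setDv set0U (setIidPr sSU).
pose k i := U :\: g i.
pose Sg := [set [set u] | u in U].
have kin : forall i, i \in A -> k i \in Sg.
  move=> i iA; have [s c] := gsub i iA.
  have /eqP/cards1P [x kx] := cD _ s c.
  apply/imsetP; exists x; last by [].
  have : x \in k i by rewrite /k kx set11.
  by rewrite inE => /andP [].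
have kinj : {in A &, injective k}.
  move=> i j iA jA kij; apply: ginj => //.
  have [si _] := gsub i iA; have [sj _] := gsub j jA.
  by rewrite -(DD _ si) -(DD _ sj) -/(k i) kij.
have cSg : #|Sg| = #|U| by rewrite card_imset //; apply: set1_inj.
have eq : k @: A = Sg.
  apply/eqP; rewrite eqEcard cSg card_in_imset // cA leqnn andbT.
  by apply/subsetP => _ /imsetP [i iA ->]; apply: kin.
move=> S sSU cS; have /eqP/cards1P [x kx] := cD _ sSU cS.
have : U :\: S \in k @: A.
  rewrite eq kx; apply/imsetP; exists x; last by [].
  have : x \in U :\: S by rewrite kx set11.
  by rewrite inE => /andP [].
case/imsetP => i iA ki; exists i => //.
have [si _] := gsub i iA.
by rewrite -(DD _ si) -(DD _ sSU) ki.
Qed.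

Lemma point (K : dual_complex) (HK : is_colex_dual K) (c : color)
    (e : Ed K) (nu : Tet K) :
  minor_edge c e ->
  (if pi_c c nu is Some f then ef e f else false) = et e nu.
Proof.
case: HK => He Hf Ht Hinc [Hcol Hed Hfd] Hmin.
pose V := [set v | tv nu v].
have [cV cE cF] := Ht nu.
have cinj : {in V &, injective (@col K)}.
  by move=> u v; rewrite !inE => uV vV; exact: (Hcol nu).
have [w wV cw] : exists2 w, w \in V & c = col w.
  apply/imsetP.
  have -> : (@col K) @: V = setT.
    apply/eqP; rewrite eqEcard subsetT card_in_imset // cardsT card_ord cV.
    by [].
  by rewrite inE.
pose vs (f : Fc K) := [set v | fv f v].
have fsub : forall f, ft f nu -> vs f \subset V.
  move=> f ff; apply/subsetP => v; rewrite !inE => fvv.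
  by have [_ _ H _] := Hinc e f nu v; apply: H.
have cVw : #|V :\ w| = 3 by have := cV; rewrite (cardsD1 w) wV add1n; case.
have Hminv : forall v, ev e v -> v != w.
  move=> v evv; apply/eqP => vw.
  have := forallP Hmin v; rewrite evv /= cw vw.

  by rewrite eqxx.
rewrite /pi_c; case: pickP => [f /andP [ff Hcf] | Hnone].
  apply/idP/idP.
    by move=> eff; have [_ _ _ H] := Hinc e f nu w; apply: H.
  move=> etn.
  have vsf : vs f = V :\ w.
    apply/eqP; rewrite eqEcard cVw (proj1 (Hf f)) leqnn andbT.
    apply/subsetP => v vv; rewrite in_setD1 (subsetP (fsub f ff)) // andbT.
    apply/eqP => vw; move: vv; rewrite inE vw => fw.
    by have := forallP Hcf w; rewrite fw /= cw eqxx.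
  pose Ee := [set v | ev e v].
  have sEe : Ee \subset vs f.
    rewrite vsf; apply/subsetP => v; rewrite inE => evv.
    rewrite in_setD1 Hminv //= inE.
    by have [_ H _ _] := Hinc e f nu v; apply: H.
  move: sEe; rewrite /vs => sEe.
  have [e' e'f ee] : exists2 e', e' \in [set e' | ef e' f] & [set v | ev e' v] = Ee.
    apply: (@key _ _ [set v | fv f v] _ (fun e' => [set v | ev e' v])) => //.
    - move=> a b; rewrite !inE => af bf eab.
      have [_ _ _ Ha] := Hinc a f nu w; have [_ _ _ Hb] := Hinc b f nu w.
      apply: (Hed nu) ; [exact: Ha | exact: Hb | ].
      by move=> v; have := congr1 (fun S : {set Vx K} => v \in S) eab; rewrite !inE.
    - move=> a; rewrite inE => af; split; last by rewrite He (proj1 (Hf f)).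
      apply/subsetP => v; rewrite !inE => avv.
      by have [H _ _ _] := Hinc a f nu v; apply: H.
    - by rewrite (proj2 (Hf f)) (proj1 (Hf f)).
    - by rewrite (proj1 (Hf f)).
    - by rewrite He (proj1 (Hf f)).
  move: e'f; rewrite inE => e'f.
  suff <- : e' = e by [].
  have [_ _ _ Ha] := Hinc e' f nu w.
  apply: (Hed nu) => //; first by apply: Ha.
  by move=> v; have := congr1 (fun S : {set Vx K} => v \in S) ee; rewrite !inE.
have [f0 f0in vf0] : exists2 f0, f0 \in [set f | ft f nu] & vs f0 = V :\ w.
  apply: (@key _ _ V _ vs) => //.
  - move=> a b; rewrite !inE => af bf eab.
    apply: (Hfd nu) => // v.
    by have := congr1 (fun S : {set Vx K} => v \in S) eab; rewrite !inE.
  - move=> a; rewrite inE => af; split; first exact: fsub.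
    by rewrite (proj1 (Hf a)) cV.
  - by rewrite cV.
  - by rewrite cV.
  - exact: subsetDl.
  - by rewrite cVw cV.
move: f0in; rewrite inE => f0n.
have := Hnone f0; rewrite f0n /=.
have -> : is_cface c f0.
  apply/forallP => v; apply/implyP => fv0.
  have : v \in vs f0 by rewrite inE.
  rewrite vf0 in_setD1 => /andP [vw vV].
  apply/eqP => cvc; move/eqP: vw; apply.
  by apply: cinj => //; rewrite cvc.
by [].
Qed.

Lemma card_sumb (T : finType) (P : pred T) :
  #|[set x | P x]| = \sum_x (P x : nat).
Proof.
rewrite -sum1_card big_mkcond /=; apply: eq_bigr => x _; rewrite inE.
by case: (P x).
Qed.

Lemma odd_sum (T : finType) (F : T -> nat) :
  odd (\sum_x F x) = odd (\sum_x odd (F x)).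
Proof.
apply: (big_rec2 (fun a b => odd a = odd b)) => // i a b _ H.
by rewrite !oddD oddb H.
Qed.

Theorem theorem1 (K : dual_complex) (HK : is_colex_dual K) (c : color)
    (Omega : {set Tet K}) (e : Ed K) :
  minor_edge c e ->
  tc_syndrome (pi_support c Omega) e = cc_syndrome Omega e.
Proof.
move=> Hmin.
rewrite /tc_syndrome /cc_syndrome /pi_support.
have -> : [set f in [set f | odd #|[set nu in Omega | pi_c c nu == Some f]|]
           | ef e f] =
          [set f | odd #|[set nu in Omega | pi_c c nu == Some f]| && ef e f].
  by apply/setP => f; rewrite !inE.
rewrite !card_sumb.
under [in RHS]eq_bigr => nu _ do rewrite -(@point K HK c e nu Hmin).
have inner : forall nu, ((nu \in Omega) &&
   (if pi_c c nu is Some f then ef e f else false) : nat) =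
   \sum_f ((nu \in Omega) && (pi_c c nu == Some f) && ef e f : nat).
  move=> nu; case: (pi_c c nu) => [f0|]; last first.
    by rewrite big1 ?andbF // => f _; rewrite andbF.
  rewrite (bigD1 f0) //= eqxx andbT big1 ?addn0 // => f nf.
  by rewrite (inj_eq (@Some_inj _)) eq_sym (negbTE nf) andbF.
under [in RHS]eq_bigr => nu _ do rewrite inner.
rewrite exchange_big odd_sum [in RHS]odd_sum; congr odd; apply: eq_bigr => f _.
have -> : \sum_i ((i \in Omega) && (pi_c c i == Some f) && ef e f : nat) =
          ef e f * #|[set nu in Omega | pi_c c nu == Some f]|.
  rewrite -[#|_|]/(#|[set nu | (nu \in Omega) && (pi_c c nu == Some f)]|).
  rewrite card_sumb big_distrr /=; apply: eq_bigr => nu _.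
  by case: (ef e f); rewrite ?andbT ?andbF ?mul1n ?mul0n.
by case: (ef e f); rewrite ?andbT ?andbF ?mul1n ?mul0n //= oddb.
Qed.
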